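(* Let $\alpha(k,b)=b/(k\ln b)\ge2$ and $b$ sufficiently large. In a uniformly random proper $k$-coloring of the complete tree $T$ with branching factor $b$, the probability that any given vertex of $T$ is not frozen is at most $b^{-1}$.
   Context: A vertex $v$ is frozen in coloring $\sigma$ if every proper coloring agreeing with $\sigma$ on the leaves of the subtree rooted at $v$ gives $v$ the color $\sigma(v)$; leaves are always frozen. *)

(* Defs.v *)
From mathcomp Require Import all_boot.
Set Implicit Arguments. Unset Strict Implicit. Unset Printing Implicit Defensive.

(* Vertices of the complete b-ary tree of depth n: words over 'I_b of length d <= n.
   The root is the empty word; the children of w are the words rcons w i. *)
Definition vtx (b n : nat) : finType := {d : 'I_n.+1 & d.-tuple 'I_b}.

Definition word b n (v : vtx b n) : seq 'I_b := val (tagged v).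

Definition child b n (w u : vtx b n) : bool :=
  (size (word u) == (size (word w)).+1) && prefix (word w) (word u).

Definition desc b n (v u : vtx b n) : bool := prefix (word v) (word u).

Definition leaf b n (u : vtx b n) : bool := size (word u) == n.

Definition coloring b n k := {ffun vtx b n -> 'I_k}.

Definition proper_col b n k (c : coloring b n k) : bool :=
  [forall w, forall u, child w u ==> (c w != c u)].

Definition proper_on b n k (v : vtx b n) (c : coloring b n k) : bool :=
  [forall w, forall u, (desc v w && child w u) ==> (c w != c u)].

Definition frozen b n k (sigma : coloring b n k) (v : vtx b n) : bool :=
  [forall tau : coloring b n k,
     (proper_on v tau && [forall u, (desc v u && leaf u) ==> (tau u == sigma u)])
     ==> (tau v == sigma v)].

(* Main.v *)
Require Import Defs.
From mathcomp Require Import all_boot zify.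
Set Implicit Arguments. Unset Strict Implicit. Unset Printing Implicit Defensive.

Section Tree.
Variables b n : nat.
Local Notation T := (vtx b n).

Lemma size_word (v : T) : size (word v) = tag v.
Proof. by case: v => d t; rewrite /word /= size_tuple. Qed.

Lemma size_word_le (v : T) : size (word v) <= n.
Proof. by rewrite size_word -ltnS ltn_ord. Qed.

Lemma word_inj (v w : T) : word v = word w -> v = w.
Proof.
case: v => d t; case: w => d' t'; rewrite /word /= => Ht.
have Ed : d = d' by apply: val_inj; rewrite /= -(size_tuple t) -(size_tuple t') Ht.
subst d'; by rewrite (val_inj Ht).
Qed.

Definition mkv (s : seq 'I_b) (H : size s < n.+1) : T :=
  @existT _ _ (Ordinal H) (@Tuple _ _ s (eqxx (size s))).

Lemma word_mkv s H : word (@mkv s H) = s.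
Proof. by []. Qed.

Lemma desc_refl (v : T) : desc v v.
Proof. exact: prefix_refl. Qed.

Lemma desc_trans (u v w : T) : desc u v -> desc v w -> desc u w.
Proof. exact: prefix_trans. Qed.

Lemma child_desc (w x : T) : child w x -> desc w x.
Proof. by case/andP. Qed.

Lemma prefix_size_eq (s1 s2 t : seq 'I_b) :
  prefix s1 t -> prefix s2 t -> size s1 = size s2 -> s1 = s2.
Proof.
move=> /prefixP [r1 ->] /prefixP [r2 E] Hs.
have := congr1 (take (size s1)) E.
by rewrite !take_size_cat.
Qed.

Lemma prefix_size_le (s1 s2 t : seq 'I_b) :
  prefix s1 t -> prefix s2 t -> size s1 <= size s2 -> prefix s1 s2.
Proof.
rewrite !prefixE => /eqP E1 /eqP E2 Hs.
by rewrite -E2 take_takel // E1.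
Qed.

Lemma edge_split (u w x : T) : child w x -> desc u x -> ~~ desc u w -> x = u.
Proof.
case/andP=> /eqP Hsz Hwx Hux Huw; apply: word_inj.
have Hle : size (word u) <= size (word x) by apply: size_prefix.
case: (ltnP (size (word u)) (size (word x))) => Hlt.
  by move: Huw; rewrite /desc (prefix_size_le Hux Hwx) //; rewrite Hsz in Hlt.
apply: (prefix_size_eq (prefix_refl _) Hux); apply/eqP; by rewrite eqn_leq Hlt Hle.
Qed.

Lemma parent_uniq (v w x : T) : child v x -> child w x -> v = w.
Proof.
case/andP=> /eqP H1 P1 /andP [/eqP H2 P2]; apply: word_inj.
by apply: prefix_size_eq P1 P2 _; apply/eqP; rewrite -eqSS -H1 -H2.
Qed.

Lemma desc_size (u x : T) : desc u x -> size (word u) <= size (word x).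
Proof. exact: size_prefix. Qed.

Lemma desc_desc_size (u v x : T) : desc u x -> desc v x ->
  size (word u) <= size (word v) -> desc u v.
Proof. exact: prefix_size_le. Qed.

Lemma chv_proof (v : T) (H : size (word v) < n) (i : 'I_b) :
  size (rcons (word v) i) < n.+1.
Proof. by rewrite size_rcons. Qed.

Definition chv (v : T) (H : size (word v) < n) (i : 'I_b) : T :=
  @mkv (rcons (word v) i) (chv_proof H i).

Lemma word_chv v H i : word (@chv v H i) = rcons (word v) i.
Proof. by []. Qed.

Lemma child_chv v H i : child v (@chv v H i).
Proof. by rewrite /child word_chv size_rcons eqxx prefix_rcons. Qed.

Lemma chv_inj v H i j : @chv v H i = @chv v H j -> i = j.
Proof. move/(congr1 (@word b n)); rewrite !word_chv => /rcons_inj; by case. Qed.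

Lemma desc_chv_v v H i x : desc (@chv v H i) x -> desc v x.
Proof. by apply: desc_trans; apply: child_desc; apply: child_chv. Qed.

Lemma not_desc_chv_v v H i : ~~ desc (@chv v H i) v.
Proof.
apply/negP => /desc_size; by rewrite word_chv size_rcons ltnn.
Qed.

Lemma desc_chv_disj v H i j x :
  desc (@chv v H i) x -> desc (@chv v H j) x -> i = j.
Proof.
move=> Hi Hj; apply: (@chv_inj v H); apply: word_inj.
apply: prefix_size_eq Hi Hj _; by rewrite !word_chv !size_rcons.
Qed.


Variable k : nat.
Local Notation col := (coloring b n k).

Lemma proper_onP (u : T) (s : col) :
  reflect (forall w x, desc u w -> child w x -> s w != s x) (proper_on u s).
Proof.
apply: (iffP forallP) => [H w x Hw Hc | H w].
  by have /forallP /(_ x) := H w; rewrite Hw Hc.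
by apply/forallP => x; apply/implyP => /andP [Hw Hc]; apply: H.
Qed.

Lemma proper_on_sub (u v : T) (s : col) : desc u v -> proper_on u s -> proper_on v s.
Proof.
move=> Huv /proper_onP H; apply/proper_onP => w x Hw; apply: H.
exact: desc_trans Hw.
Qed.

Lemma proper_on_ext (u : T) (s s' : col) :
  (forall x, desc u x -> s x = s' x) -> proper_on u s = proper_on u s'.
Proof.
move=> E; apply/proper_onP/proper_onP => H w x Hw Hc.
  rewrite -!E //; [exact: H | exact: desc_trans Hw (child_desc Hc)].
rewrite !E //; [exact: H | exact: desc_trans Hw (child_desc Hc)].
Qed.

Lemma frozen_ext (u : T) (s s' : col) :
  (forall x, desc u x -> s x = s' x) -> frozen s u = frozen s' u.
Proof.
move=> E; rewrite /frozen; apply: eq_forallb => tau.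
rewrite E ?desc_refl //; congr (_ ==> _); congr (_ && _).
apply: eq_forallb => x; case Hx: (desc u x) => //=; by rewrite E.
Qed.

Lemma frozen_leaf (u : T) (s : col) : leaf u -> frozen s u.
Proof.
move=> Hl; apply/forallP => tau; apply/implyP => /andP [_ /forallP /(_ u)].
by rewrite desc_refl Hl.
Qed.

Lemma frozen_step (v : T) (H : size (word v) < n) (s : col) :
  (forall c, c != s v -> exists i, frozen s (chv H i) && (s (chv H i) == c)) ->
  frozen s v.
Proof.
move=> Hc; apply/forallP => tau; apply/implyP => /andP [Hp Hl].
case E: (tau v == s v) => //.
have [i /andP [Hf /eqP Hi]] := Hc (tau v) (negbT E).
have := forallP Hf tau.
rewrite (proper_on_sub (child_desc (child_chv H i)) Hp) /=.
have -> : [forall u, desc (chv H i) u && leaf u ==> (tau u == s u)].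
  apply/forallP => u; apply/implyP => /andP [Hu Hlu].
  by have /forallP /(_ u) := Hl; rewrite (desc_chv_v Hu) Hlu.
move=> /implyP /(_ isT) /eqP Ht.
move/proper_onP: Hp => /(_ v (chv H i) (desc_refl _) (child_chv H i)).
by rewrite Ht Hi eqxx.
Qed.

Definition agree_out (u : T) (s r : col) := [forall x, ~~ desc u x ==> (s x == r x)].

Definition Aset (u : T) (r : col) (a : 'I_k) : {set col} :=
  [set s : col | [&& proper_on u s, s u == a & agree_out u s r]].
Definition Bset (u : T) (r : col) (a : 'I_k) : {set col} :=
  [set s in Aset u r a | ~~ frozen s u].

Definition swc (a a' c : 'I_k) : 'I_k := if c == a then a' else if c == a' then a else c.

Lemma swcK a a' : involutive (swc a a').
Proof.
move=> c; rewrite /swc.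
case: (eqVneq c a) => [->|Hca]; first by rewrite eqxx; case: (eqVneq a' a).
case: (eqVneq c a') => [->|Hca']; first by rewrite eqxx.
by rewrite (negbTE Hca) (negbTE Hca').
Qed.

Definition swf (u : T) a a' (s : col) : col :=
  [ffun x => if desc u x then swc a a' (s x) else s x].

Lemma swfK u a a' : involutive (swf u a a').
Proof.
by move=> s; apply/ffunP => x; rewrite !ffunE; case: (desc u x) => //; rewrite swcK.
Qed.

Lemma swf_A u r a a' s : s \in Aset u r a -> swf u a a' s \in Aset u r a'.
Proof.
rewrite !inE => /and3P [Hp /eqP Hu Ha]; apply/and3P; split.
- apply/proper_onP => w x Hw Hc; rewrite !ffunE Hw (desc_trans Hw (child_desc Hc)).
  by rewrite (inj_eq (can_inj (swcK a a'))); move/proper_onP: Hp; apply.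
- by rewrite ffunE desc_refl Hu /swc eqxx.
- apply/forallP => x; apply/implyP => Hx; rewrite ffunE (negbTE Hx).
  by move/forallP: Ha => /(_ x); rewrite Hx.
Qed.

Lemma card_A_sym u r a a' : #|Aset u r a| = #|Aset u r a'|.
Proof.
have L : forall a a', #|Aset u r a| <= #|Aset u r a'|.
  move=> c c'; rewrite -(card_imset _ (can_inj (swfK u c c'))).
  by apply: subset_leq_card; apply/subsetP => _ /imsetP [s Hs ->]; apply: swf_A.
by apply/eqP; rewrite eqn_leq !L.
Qed.



Lemma agree_outP (u : T) (s r : col) :
  reflect (forall x, ~~ desc u x -> s x = r x) (agree_out u s r).
Proof.
apply: (iffP forallP) => [H x Hx | H x].
  by have /implyP /(_ Hx) /eqP := H x.
by apply/implyP => Hx; rewrite H.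
Qed.

Definition key (u : T) (s : col) : {ffun T -> option 'I_k} :=
  [ffun x => if desc u x then None else Some (s x)].

Lemma keyP (u : T) (s r : col) : (key u s == key u r) = agree_out u s r.
Proof.
apply/eqP/agree_outP => [E x Hx | E].
  by have := congr1 (fun f : {ffun T -> option 'I_k} => f x) E; rewrite !ffunE (negbTE Hx) => [[]].
apply/ffunP => x; rewrite !ffunE; case: ifP => // /negbT Hx; by rewrite E.
Qed.

End Tree.

Lemma card_fiber (X K : finType) (f : X -> K) (S : {set X}) :
  #|S| = \sum_(g : K) #|[set x in S | f x == g]|.
Proof.
rewrite -sum1_card (partition_big f predT) //=.
by apply: eq_bigr => g _; rewrite -sum1_card; apply: eq_bigl => x; rewrite inE.
Qed.

Lemma fiber_le (X K : finType) (f : X -> K) (S S' : {set X}) m d :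
  (forall g, m * #|[set x in S' | f x == g]| <= d * #|[set x in S | f x == g]|) ->
  m * #|S'| <= d * #|S|.
Proof.
move=> H; rewrite (card_fiber f S) (card_fiber f S') !big_distrr /=.
by apply: leq_sum => g _; apply: H.
Qed.


Lemma union_bound (X I : finType) (P : pred I) (S : {set X}) (F : I -> {set X}) :
  (forall x, x \in S -> exists i, P i && (x \in F i)) ->
  #|S| <= \sum_(i | P i) #|F i|.
Proof.
move=> HS; rewrite -sum1_card.
apply: (@leq_trans (\sum_(x in S) \sum_(i | P i) (x \in F i))).
  apply: leq_sum => x /HS [i /andP [Pi Hi]].
  by rewrite (bigD1 i) //= Hi.
rewrite exchange_big /=; apply: leq_sum => i _.
rewrite -sum1_card big_mkcond /= [X in _ <= X]big_mkcond /=.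
apply: leq_sum => x _; by case: (x \in S); case: (x \in F i).
Qed.

Lemma mul0_le x y z : x = 0 -> x * y <= z.
Proof. by move->. Qed.

Lemma arith_step k b N B x : 1 < k -> x <= k.-1 * N - (N - B) -> b * B <= N -> B <= N ->
  k.-1 * b * x <= (k.-2 * b + 1) * (k.-1 * N).
Proof.
case: k => [|[|K]] // _ /=.
move=> H1 H2 H3.
have H4 : x <= K * N + B by lia.
have H5 : K.+1 * b * x <= K.+1 * b * (K * N + B) by apply: leq_mul.
apply: (leq_trans H5).
have -> : (K * b + 1) * (K.+1 * N) = K.+1 * (K * b * N + N) by nia.
rewrite -mulnA; apply: leq_mul => //.
rewrite mulnDr; rewrite mulnA.
rewrite [b * K]mulnC leq_add2l //.
Qed.

Section Step.
Variables b n k : nat.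
Local Notation T := (vtx b n).
Local Notation col := (coloring b n k).
Variables (v : T) (H : size (word v) < n) (r : col) (a : 'I_k).

Fact Cset_key : unit. Proof. exact: tt. Qed.
Definition Cset (c : 'I_k) (j : nat) : {set col} := locked_with Cset_key
  [set s in Aset v r a | [forall i : 'I_b, (i < j) ==> ~~ (frozen s (chv H i) && (s (chv H i) == c))]].

Lemma inC c j s : (s \in Cset c j) = (s \in Aset v r a) &&
  [forall i : 'I_b, (i < j) ==> ~~ (frozen s (chv H i) && (s (chv H i) == c))].
Proof. by rewrite [Cset _ _]unlock inE. Qed.

Section Fib.
Variables (c : 'I_k) (jj : 'I_b) (s0 s : col).
Local Notation u := (chv H jj).
Hypothesis Hs0 : s0 \in Cset c jj.
Hypothesis Hag : agree_out u s s0.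

Lemma fib_A : (s \in Aset v r a) = proper_on u s && (s u != a).
Proof.
move: Hs0; rewrite inC !inE => /andP [/and3P [Hp0 /eqP Hv0 Har0] _].
move/agree_outP: Hag => Ag.
have Hv : s v = a by rewrite Ag ?not_desc_chv_v.
rewrite Hv eqxx /=.
have -> : agree_out v s r.
  apply/agree_outP => x Hx; rewrite Ag; first by move/agree_outP: Har0; apply.
  by apply: contra Hx; apply: desc_chv_v.
rewrite andbT; apply/idP/andP => [Hp | [Hpu Hua]].
  split; first exact: proper_on_sub (child_desc (child_chv H jj)) Hp.
  rewrite -Hv eq_sym; move/proper_onP: Hp; apply; [exact: desc_refl | exact: child_chv].
apply/proper_onP => w x Hw Hc.
case Hwu: (desc u w).
  by move/proper_onP: Hpu; apply.
case Hxu: (desc u x).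
  have Ex := edge_split Hc Hxu (negbT Hwu); subst x.
  have Ew := parent_uniq Hc (child_chv H jj); subst w.
  by rewrite Hv eq_sym.
rewrite !Ag ?Hwu ?Hxu //; move/proper_onP: Hp0; apply => //.
Qed.

Lemma fib_other (i : 'I_b) : i != jj ->
  frozen s (chv H i) = frozen s0 (chv H i) /\ s (chv H i) = s0 (chv H i).
Proof.
move=> Hij; move/agree_outP: Hag => Ag.
have D : forall x, desc (chv H i) x -> ~~ desc u x.
  move=> x Hx; apply/negP => Hx'; move: Hij; by rewrite (desc_chv_disj Hx Hx') eqxx.
split; last by rewrite Ag // D // desc_refl.
by apply: frozen_ext => x Hx; rewrite Ag // D.
Qed.
End Fib.



Lemma Cset_sub c j : Cset c j.+1 \subset Cset c j.
Proof.
apply/subsetP => s; rewrite !inC => /andP [-> /forallP Hf] /=.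
apply/forallP => i; apply/implyP => Hi; have /implyP := Hf i; apply; exact: ltnW.
Qed.

Lemma Cset0 c : Cset c 0 = Aset v r a.
Proof. apply/setP => s; rewrite inC; apply/andb_idr => _; by apply/forallP => i. Qed.

Lemma Cset_S c (jj : 'I_b) s : (s \in Cset c jj.+1) =
  (s \in Cset c jj) && ~~ (frozen s (chv H jj) && (s (chv H jj) == c)).
Proof.
rewrite !inC -andbA; case: (s \in Aset v r a) => //=; apply/forallP/andP => [Hf | [/forallP Hf Hj] i].
  split; first by apply/forallP => i; apply/implyP => Hi; have /implyP := Hf i; apply; exact: ltnW.
  by have /implyP := Hf jj; apply.
apply/implyP; rewrite ltnS leq_eqVlt => /orP [/eqP /val_inj -> //| Hi].
by have /implyP := Hf i; apply.
Qed.

Lemma fib_C c (jj : 'I_b) s0 s : s0 \in Cset c jj -> agree_out (chv H jj) s s0 ->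
  (s \in Cset c jj) = proper_on (chv H jj) s && (s (chv H jj) != a).
Proof.
move=> Hs0 Hag; rewrite inC (fib_A Hs0 Hag); apply/andb_idr => _.
move: Hs0; rewrite inC => /andP [_ /forallP Hf]; apply/forallP => i; apply/implyP => Hi.
have Hij : i != jj by apply/eqP => E; move: Hi; rewrite E ltnn.
have [-> ->] := fib_other Hag Hij.
by have /implyP := Hf i; apply.
Qed.

Hypothesis Hk : 1 < k.

Lemma step_C c (jj : 'I_b) : c != a ->
  (forall (rho : col) (a' : 'I_k), b * #|Bset (chv H jj) rho a'| <= #|Aset (chv H jj) rho a'|) ->
  ((k.-1) * b) * #|Cset c jj.+1| <= ((k.-2) * b + 1) * #|Cset c jj|.
Proof.
move=> Hca IH; apply: (@fiber_le _ _ (key (chv H jj))) => g.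
set u := chv H jj.
set F := [set x in Cset c jj | key u x == g].
set F' := [set x in Cset c jj.+1 | key u x == g].
have sFF : F' \subset F.
  apply/subsetP => s; rewrite !inE => /andP [Hs ->]; rewrite andbT.
  by apply: (subsetP (Cset_sub c jj)).
case: (set_0Vmem F) => [F0 | [s0 Hs0F]].
  by move: sFF; rewrite F0 subset0 => /eqP ->; rewrite cards0 muln0.
have Hs0 : s0 \in Cset c jj by move: Hs0F; rewrite inE => /andP [].
have Hg : key u s0 = g by move: Hs0F; rewrite inE => /andP [_ /eqP].
have FE : F = [set s | [&& proper_on u s, s u != a & agree_out u s s0]].
  apply/setP => s; rewrite !inE -Hg keyP.
  case Ha: (agree_out u s s0); rewrite ?andbF // !andbT.
  by rewrite (fib_C Hs0 Ha).
set N := #|Aset u s0 c|.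
have cardF : #|F| = k.-1 * N.
  rewrite FE (@card_fiber _ _ (fun s : col => s u)) (bigD1 a) //=.
  rewrite [X in X + _](_ : _ = 0); last first.
    apply/eqP; rewrite cards_eq0; apply/eqP/setP => s; rewrite !inE.
    by case: (s u == a); rewrite ?andbF ?andbT //= andbC.
  rewrite add0n (eq_bigr (fun _ => N)); last first.
    move=> a' Ha'; rewrite /N (card_A_sym u s0 c a'); apply: eq_card => s.
    rewrite !inE; case E: (s u == a'); rewrite ?andbF ?andbT //=.
    by rewrite (eqP E) Ha' /=.
  rewrite sum_nat_const; congr (_ * _).
  have := cardC1 a; rewrite card_ord => <-; apply: eq_card => x.
  by rewrite !inE.
set D := Aset u s0 c :\: Bset u s0 c.
have sDF : D \subset F.
  apply/subsetP => s; rewrite FE !inE => /andP [_ /and3P [-> /eqP -> ->]].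
  by rewrite Hca.
have sF'D : F' \subset F :\: D.
  apply/subsetP => s Hs; rewrite inE (subsetP sFF _ Hs) andbT.
  move: Hs; rewrite inE => /andP [Hs Hk']; rewrite Cset_S in Hs.
  case/andP: Hs => _ Hn; rewrite !inE negb_and negbK.
  case: and3P => [[_ /eqP Hc _]|_] //=.
  by rewrite orbF; move: Hn; rewrite -/u Hc eqxx andbT.
have cD : #|D| = N - #|Bset u s0 c|.
  rewrite cardsD; congr (_ - _); rewrite (setIidPr _) //.
  by apply/subsetP => s; rewrite inE => /andP [].
have cF' : #|F'| <= #|F| - #|D|.
  by rewrite -(setIidPr sDF) -cardsD; apply: subset_leq_card.
have IHc := IH s0 c.
have BN : #|Bset u s0 c| <= N.
  by apply: subset_leq_card; apply/subsetP => s; rewrite inE => /andP [].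
rewrite cardF; rewrite cD cardF in cF'.
move: cF' IHc BN; rewrite -/N; set B := #|Bset u s0 c|.
move=> H1 H2 H3; exact: (arith_step Hk H1 H2 H3).
Qed.


Lemma iter_C c : c != a ->
  (forall (i : 'I_b) (rho : col) (a' : 'I_k), b * #|Bset (chv H i) rho a'| <= #|Aset (chv H i) rho a'|) ->
  forall j, j <= b -> ((k.-1 * b) ^ j) * #|Cset c j| <= ((k.-2 * b + 1) ^ j) * #|Aset v r a|.
Proof.
move=> Hca IH; elim=> [|j IHj] Hj; first by rewrite !expn0 !mul1n Cset0.
have Hj' : j < b by [].
have := step_C (c:=c) (jj:=Ordinal Hj') Hca (IH _).
rewrite /= => Hs.
rewrite !expnS.
apply: (@leq_trans ((k.-1 * b) ^ j * ((k.-2 * b + 1) * #|Cset c j|))).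
  by rewrite [_ * (_ ^ j)]mulnC -mulnA; apply: leq_mul.
rewrite mulnCA -mulnA; apply: leq_mul => //; exact: IHj (ltnW Hj).
Qed.

Lemma inv_step :
  (forall (i : 'I_b) (rho : col) (a' : 'I_k), b * #|Bset (chv H i) rho a'| <= #|Aset (chv H i) rho a'|) ->
  b * k.-1 * (k.-2 * b + 1) ^ b <= (k.-1 * b) ^ b ->
  b * #|Bset v r a| <= #|Aset v r a|.
Proof.
move=> IH Har.
case: (posnP b) => [b0|bpos].
  by apply: mul0_le.
set m := k.-1 * b; set d := k.-2 * b + 1.
have HB : #|Bset v r a| <= \sum_(c | c != a) #|Cset c b|.
  apply: union_bound => s; rewrite inE => /andP [HA Hnf].
  have Hsv : s v = a by move: HA; rewrite inE => /and3P [_ /eqP].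
  have : ~~ [forall c, (c != s v) ==> [exists i, frozen s (chv H i) && (s (chv H i) == c)]].
    apply: contra Hnf => /forallP Hf; apply: frozen_step => c Hc.
    by have /implyP /(_ Hc) /existsP := Hf c.
  rewrite negb_forall => /existsP [c]; rewrite negb_imply negb_exists => /andP [Hc /forallP Hi].
  exists c; rewrite -Hsv Hc /= inC HA /=.
  by apply/forallP => i; rewrite Hi implybT.
have HC : forall c, c != a -> m ^ b * #|Cset c b| <= d ^ b * #|Aset v r a|.
  by move=> c Hc; apply: iter_C.
have E1 : m ^ b * #|Bset v r a| <= k.-1 * (d ^ b * #|Aset v r a|).
  apply: (leq_trans (leq_mul (leqnn _) HB)); rewrite big_distrr /=.
  apply: (@leq_trans (\sum_(c | c != a) (d ^ b * #|Aset v r a|))).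
    by apply: leq_sum => c Hc; apply: HC.
  rewrite sum_nat_const; apply: leq_mul => //.
  by have := cardC1 a; rewrite card_ord => <-; apply: eq_leq; apply: eq_card => x; rewrite !inE.
have mpos : 0 < m ^ b by rewrite expn_gt0 muln_gt0 bpos andbT; case: k Hk => [|[|]].
rewrite -(leq_pmul2l mpos) mulnCA.
apply: (leq_trans (leq_mul (leqnn b) E1)).
by rewrite mulnA mulnA; apply: leq_mul => //.
Qed.
End Step.


Section Main.
Variables b n k : nat.
Local Notation T := (vtx b n).
Local Notation col := (coloring b n k).

Lemma inv_frozen (u : T) (r : col) a : (forall s : col, frozen s u) ->
  b * #|Bset u r a| <= #|Aset u r a|.
Proof.
move=> Hf; rewrite (_ : #|Bset u r a| = 0) ?muln0 //; apply/eqP; rewrite cards_eq0; apply/eqP/setP => s.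
by rewrite !inE Hf andbF.
Qed.

Lemma inv_all :
  b * k.-1 * (k.-2 * b + 1) ^ b <= (k.-1 * b) ^ b ->
  forall (u : T) (r : col) a, b * #|Bset u r a| <= #|Aset u r a|.
Proof.
move=> Har.
case: (leqP k 1) => Hk.
  move=> u r a; apply: inv_frozen => s.
  case: (ltnP (size (word u)) n) => Hu; last first.
    by apply: frozen_leaf; rewrite /leaf eqn_leq size_word_le Hu.
  apply: (frozen_step (H:=Hu)) => c Hc; exfalso; move: Hc.
  have E : c = s u.
    apply: ord_inj; move: (ltn_ord c) (ltn_ord (s u)); move: (nat_of_ord c) (nat_of_ord (s u)) => x y; lia.
  by rewrite E eqxx.
suff: forall h (u : T), n - size (word u) <= h ->
  forall (r : col) a, b * #|Bset u r a| <= #|Aset u r a|.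
  by move=> S u; apply: (S (n - size (word u))).
elim=> [|h IHh] u Hh.
  move=> r a; apply: inv_frozen => s; apply: frozen_leaf.
  by rewrite /leaf eqn_leq size_word_le /=; lia.
case: (ltnP (size (word u)) n) => Hu; last first.
  move=> r a; apply: inv_frozen => s; apply: frozen_leaf.
  by rewrite /leaf eqn_leq size_word_le Hu.
move=> r a; apply: (inv_step (H:=Hu)) => // i rho a'.
apply: IHh; rewrite word_chv size_rcons; lia.
Qed.
End Main.


Section Top.
Variables b n k : nat.
Local Notation T := (vtx b n).
Local Notation col := (coloring b n k).

Lemma proper_colP (s : col) :
  reflect (forall w x, child w x -> s w != s x) (proper_col s).
Proof.
apply: (iffP forallP) => [Hf w x Hc | Hf w].
  by have /forallP /(_ x) /implyP := Hf w; apply.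
by apply/forallP => x; apply/implyP; apply: Hf.
Qed.

Lemma proper_col_fib (v : T) (s s0 : col) : proper_col s0 -> agree_out v s s0 ->
  s v = s0 v -> proper_col s = proper_on v s.
Proof.
move=> /proper_colP P0 /agree_outP Ag Ev.
apply/proper_colP/proper_onP => [Hp w x _ Hc | Hp w x Hc]; first exact: Hp.
case Hw: (desc v w); first exact: Hp Hw Hc.
case Hx: (desc v x).
  have Ex := edge_split Hc Hx (negbT Hw); subst x.
  by rewrite Ev Ag ?Hw //; apply: P0.
by rewrite !Ag ?Hw ?Hx //; apply: P0.
Qed.

Lemma count_bound (v : T) :
  b * k.-1 * (k.-2 * b + 1) ^ b <= (k.-1 * b) ^ b ->
  b * #|[set s : col | proper_col s && ~~ frozen s v]| <= 1 * #|[set s : col | proper_col s]|.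
Proof.
move=> Har.
apply: (@fiber_le _ _ (fun s : col => (key v s, s v))) => [[g a]].
set X := [set x in [set s : col | proper_col s] | _].
set Y := [set x in [set s : col | proper_col s && ~~ frozen s v] | _].
case: (set_0Vmem X) => [X0 | [s0 Hs0]].
  have : Y \subset X.
    apply/subsetP => s; rewrite !inE => /andP [/andP [-> _] ->]; by [].
  by rewrite X0 subset0 => /eqP ->; rewrite cards0 muln0.
move: (Hs0); rewrite !inE => /andP [P0 /eqP [Hg Ha]].
have EX : X = Aset v s0 a.
  apply/setP => s; rewrite !inE xpair_eqE -Hg keyP -Ha.
  case Hag: (agree_out v s s0); rewrite ?andbF ?andbT //=.
  case Ev: (s v == s0 v); rewrite ?andbF ?andbT //=.
  by rewrite (proper_col_fib P0 Hag (eqP Ev)).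
have EY : Y = Bset v s0 a.
  apply/setP => s; rewrite !inE xpair_eqE -Hg keyP -Ha.
  case Hag: (agree_out v s s0); rewrite ?andbF ?andbT //=.
  case Ev: (s v == s0 v); rewrite ?andbF ?andbT //=.
  by rewrite (proper_col_fib P0 Hag (eqP Ev)) andbC.
by rewrite EX EY mul1n; apply: inv_all.
Qed.
End Top.

From Stdlib Require Import Reals Lra.
Local Open Scope R_scope.

Lemma exp_le_mono x y : x <= y -> exp x <= exp y.
Proof. intros [H|H]; [left; apply exp_increasing; auto | subst; lra]. Qed.

Lemma ln_le_mono x y : 0 < x -> x <= y -> ln x <= ln y.
Proof. intros Hx [H|H]; [left; apply ln_increasing; auto | subst; lra]. Qed.

Lemma exp_pow_R x (m : nat) : exp x ^ m = exp (INR m * x).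
Proof.
rewrite -[LHS](exp_ln (exp x ^ m)); last by apply pow_lt, exp_pos.
rewrite ln_pow; last by apply exp_pos. by rewrite ln_exp.
Qed.

Lemma real_core (B L : R) (b : nat) : B = INR b -> 9 <= B -> 0 <= L ->
  2 * (L + 2) * ln B <= B ->
  B * (L + 1) * (L * B + 1) ^ b <= ((L + 1) * B) ^ b.
Proof.
intros EB HB HL Hh.
assert (Bpos : 0 < B) by lra.
set (M := (L + 1) * B).
assert (Mpos : 0 < M) by (unfold M; nra).
set (q := (L * B + 1) / M).
assert (Eq : L * B + 1 = M * q) by (unfold q; field; lra).
rewrite Eq Rpow_mult_distr.
assert (lnB : 2 <= ln B).
{ assert (E2 : exp 2 <= 9).
  { replace 2 with (1 + 1) by lra. rewrite exp_plus.
    pose proof exp_le_3. pose proof (exp_pos 1). nra. }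
  rewrite -(ln_exp 2). apply ln_le_mono; [apply exp_pos | lra]. }
set (y := (B - 1) / M).
assert (q1 : q = 1 - y) by (unfold q, y, M; field; lra).
assert (y0 : 0 <= y) by (unfold y, Rdiv; apply Rmult_le_pos; [lra| left; apply Rinv_0_lt_compat; lra]).
assert (qpos : 0 <= q).
{ unfold q, Rdiv. apply Rmult_le_pos; [nra| left; apply Rinv_0_lt_compat; lra]. }
assert (qexp : q ^ b <= exp (- (INR b * y))).
{ replace (- (INR b * y)) with (INR b * (- y)) by ring.
  rewrite -exp_pow_R. apply pow_incr. split; auto.
  rewrite q1. pose proof (exp_ineq1_le (- y)). lra. }
assert (Eby : INR b * y = (B - 1) / (L + 1)).
{ rewrite -EB. unfold y, M. field. lra. }
rewrite Eby in qexp.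
assert (Hk : 2 * ln B - 1 <= (B - 1) / (L + 1)).
{ apply Rmult_le_reg_r with (L + 1); [lra|].
  unfold Rdiv. rewrite Rmult_assoc Rinv_l; [nra|lra]. }
assert (te : exp (- ((B - 1) / (L + 1))) * (B * B) <= exp 1).
{ assert (exp (- ((B - 1) / (L + 1))) <= exp (1 - 2 * ln B)) by (apply exp_le_mono; lra).
  replace (1 - 2 * ln B) with (1 + - (ln B + ln B)) in H by ring.
  rewrite exp_plus (exp_Ropp (ln B + ln B)) (exp_plus (ln B) (ln B)) exp_ln in H; last lra.
  apply Rmult_le_reg_r with (/ (B * B)).
  { apply Rinv_0_lt_compat; nra. }
  rewrite Rmult_assoc Rinv_r; [lra|nra]. }
pose proof exp_le_3.
set (t := exp (- ((B - 1) / (L + 1)))) in *.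
assert (tpos : 0 <= t) by (left; apply exp_pos).
assert (Mb : 0 < M ^ b) by (apply pow_lt; auto).
assert (Hb3 : 3 * (L + 1) <= B) by nra.
assert (key : B * (L + 1) * q ^ b <= 1).
{ assert (B * (L + 1) * t <= 1).
  { apply Rmult_le_reg_r with B; [lra|]. nra. }
  assert (0 <= q ^ b) by (apply pow_le; auto).
  assert (B * (L + 1) * q ^ b <= B * (L + 1) * t).
  { apply Rmult_le_compat_l; [nra | exact qexp]. }
  lra. }
replace (B * (L + 1) * (M ^ b * q ^ b)) with (M ^ b * (B * (L + 1) * q ^ b)) by ring.
rewrite -{2}(Rmult_1_r (M ^ b)).
apply Rmult_le_compat_l; lra.
Qed.

Local Close Scope R_scope.

Lemma expn_pow (m e : nat) : expn m e = Nat.pow m e.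
Proof. elim: e => // e IH; by rewrite expnS IH. Qed.

Lemma nat_ineq b k : 9 <= b -> 0 < k ->
  (2 <= INR b / (INR k * ln (INR b)))%R ->
  b * k.-1 * expn (k.-2 * b + 1) b <= expn (k.-1 * b) b.
Proof.
case: k => [|[|L]] // Hb _ Hh; first by rewrite muln0 mul0n.
change (b * L.+1 * expn (L * b + 1) b <= expn (L.+1 * b) b).
have HB : (9 <= INR b)%R.
  have H9 := le_INR 9 b (elimT leP Hb); simpl in H9; lra.
have lnpos : (0 < ln (INR b))%R.
  rewrite -ln_1; apply: ln_increasing; lra.
have Hk : (2 * (INR L + 2) * ln (INR b) <= INR b)%R.
  have E : INR L.+2 = (INR L + 2)%R by rewrite !S_INR; lra.
  rewrite E in Hh.
  have Lpos : (0 <= INR L)%R by apply: pos_INR.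
  have P : (0 < (INR L + 2) * ln (INR b))%R by nra.
  apply: (Rmult_le_reg_r (/ ((INR L + 2) * ln (INR b)))); first exact: Rinv_0_lt_compat.
  move: Hh; rewrite /Rdiv; set z := (/ _)%R; move=> Hh.
  have -> : (2 * (INR L + 2) * ln (INR b) * z = 2 * (((INR L + 2) * ln (INR b)) * z))%R by ring.
  rewrite /z Rinv_r; [rewrite -/z; lra | lra].
apply/leP; apply: INR_le.
rewrite !expn_pow -!multE -plusE !mult_INR !pow_INR !mult_INR plus_INR.
have E1 : INR L.+1 = (INR L + 1)%R by rewrite S_INR.
rewrite E1 /=.
rewrite mult_INR.
apply: (real_core (B := INR b) (L := INR L) (b := b)) => //.
  exact: pos_INR.
Qed.

Theorem lemma12 :
  exists b0 : nat, forall b k n : nat, (b0 <= b)%N -> (0 < k)%N ->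
    (2 <= INR b / (INR k * ln (INR b)))%R ->
    forall v : vtx b n,
      (INR #|[set sigma : coloring b n k | proper_col sigma && ~~ frozen sigma v]|
         / INR #|[set sigma : coloring b n k | proper_col sigma]| <= / INR b)%R.
Proof.
exists 9 => b k n Hb Hk Hh v.
have C := count_bound v (nat_ineq Hb Hk Hh).
rewrite mul1n in C.
move: C; set x := #|_|; set y := #|_| => C.
have bpos : (0 < INR b)%R by apply: lt_0_INR; apply/ltP; lia.
have C' : (INR b * INR x <= INR y)%R.
  rewrite -mult_INR; apply: le_INR; apply/leP; exact: C.
have xpos : (0 <= INR x)%R by apply: pos_INR.
case: (posnP y) => [y0 | ypos].
  have x0 : x = 0 by move: C; rewrite y0; lia.
  by rewrite x0 /= /Rdiv Rmult_0_l; left; apply: Rinv_0_lt_compat.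
have yp : (0 < INR y)%R by apply: lt_0_INR; apply/ltP.
apply: (Rmult_le_reg_l (INR b)) => //.
apply: (Rmult_le_reg_r (INR y)) => //.
rewrite /Rdiv.
have -> : (INR b * (INR x * / INR y) * INR y = INR b * INR x * (/ INR y * INR y))%R by ring.
have -> : (INR b * / INR b * INR y = INR y * (INR b * / INR b))%R by ring.
rewrite Rinv_l; last by apply: not_eq_sym; apply: Rlt_not_eq.
rewrite Rinv_r; last by apply: not_eq_sym; apply: Rlt_not_eq.
lra.
Qed.
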